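(* Let $S$ be a partial semigroup. (i) If $I$ is a two-sided ideal in $S$ such that $S$ is $I$-directed, then $\{\mathcal{U}\in\gamma S: I\in\mathcal{U}\}$ is a compact two-sided ideal in $\gamma S$. (ii) If $E$ is a right ideal in $S$ such that $S$ is $E$-directed, then $\{\mathcal{U}\in\gamma S: E\in\mathcal{U}\}$ is a compact right ideal in $\gamma S$.
   Context: Partial semigroup: partial operation with $(rs)t$ defined iff $r(st)$ defined, then equal. For $A\subseteq S$, $S$ is $A$-directed if for all $x_1,\dots,x_n\in S$ there is $x\in A$ with all $x_ix$ defined. A two-sided ideal in $S$ is a non-empty $I\subseteq S$ with $xy\in I$ whenever $xy$ is defined and $x\in I$ or $y\in I$; a right ideal is a non-empty $E\subseteq S$ with $xy\in E$ whenever $xy$ is defined and $x\in E$. $\gamma S$ is the set of ultrafilters $\mathcal{U}$ on $S$ with $\{t:st\text{ defined}\}\in\mathcal{U}$ for each $s\in S$, with the Stone (Čech–Stone) topology and the semigroup operation $A\in\mathcal{U}*\mathcal{V}$ iff $\{s:\{t: st\text{ defined and } st\in A\}\in\mathcal{V}\}\in\mathcal{U}$. *)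

(* Defs.v *)
From Stdlib Require Import List.
Set Implicit Arguments.

Section PartialSemigroup.
Variable S : Type.
Variable op : S -> S -> option S.

Definition defined (s t : S) : Prop := op s t <> None.

(* (rs)t defined iff r(st) defined, and then equal *)
Definition psg_assoc : Prop :=
  forall r s t : S,
    match op r s with Some x => op x t | None => None end =
    match op s t with Some y => op r y | None => None end.

Definition directed (A : S -> Prop) : Prop :=
  forall xs : list S, exists x, A x /\ forall y, In y xs -> defined y x.

Definition two_sided_ideal (I : S -> Prop) : Prop :=
  (exists x, I x) /\
  forall x y z, op x y = Some z -> (I x \/ I y) -> I z.

Definition right_ideal (E : S -> Prop) : Prop :=
  (exists x, E x) /\
  forall x y z, op x y = Some z -> E x -> E z.

Definition ultrafilter (U : (S -> Prop) -> Prop) : Prop :=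
  U (fun _ => True) /\
  ~ U (fun _ => False) /\
  (forall A B : S -> Prop, U A -> (forall x, A x -> B x) -> U B) /\
  (forall A B : S -> Prop, U A -> U B -> U (fun x => A x /\ B x)) /\
  (forall A : S -> Prop, U A \/ U (fun x => ~ A x)).

Definition gammaS (U : (S -> Prop) -> Prop) : Prop :=
  ultrafilter U /\ forall s : S, U (fun t => defined s t).

Definition uprod (U V : (S -> Prop) -> Prop) : (S -> Prop) -> Prop :=
  fun A => U (fun s => V (fun t => exists z, op s t = Some z /\ A z)).

(* Stone topology on gamma S: basic open sets {U in gamma S : A in U} *)
Definition gopen (O : ((S -> Prop) -> Prop) -> Prop) : Prop :=
  forall U, gammaS U -> O U ->
    exists A, U A /\ forall V, gammaS V -> V A -> O V.

Definition gcompact (K : ((S -> Prop) -> Prop) -> Prop) : Prop :=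
  forall (iota : Type) (O : iota -> ((S -> Prop) -> Prop) -> Prop),
    (forall i, gopen (O i)) ->
    (forall U, K U -> exists i, O i U) ->
    exists l : list iota, forall U, K U -> exists i, In i l /\ O i U.

Definition gtwo_sided_ideal (K : ((S -> Prop) -> Prop) -> Prop) : Prop :=
  (exists U, K U) /\ (forall U, K U -> gammaS U) /\
  forall U V, gammaS U -> gammaS V -> (K U \/ K V) -> K (uprod U V).

Definition gright_ideal (K : ((S -> Prop) -> Prop) -> Prop) : Prop :=
  (exists U, K U) /\ (forall U, K U -> gammaS U) /\
  forall U V, gammaS U -> gammaS V -> K U -> K (uprod U V).

Definition hat (A : S -> Prop) : ((S -> Prop) -> Prop) -> Prop :=
  fun U => gammaS U /\ U A.

End PartialSemigroup.

(* Main.v *)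
Require Import Defs.
From Stdlib Require Import List.
From mathcomp Require Import all_boot.
From mathcomp Require Import classical_sets filter.

Lemma ext_ultra (S : Type) (G : (S -> Prop) -> Prop) :
  (forall L : list (S -> Prop), (forall A, In A L -> G A) ->
     exists x, forall A, In A L -> A x) ->
  exists U, ultrafilter U /\ forall A, G A -> U A.
Proof.
move=> HG.
pose F : set_system S := fun A => exists L, (forall B, In B L -> G B) /\
   forall x, (forall B, In B L -> B x) -> A x.
have FF : ProperFilter F.
  apply: Build_ProperFilter_ex.
    move=> P [L [HL HP]]; have [x Hx] := HG L HL; by exists x; apply: HP.
  split.
  - by exists nil; split.
  - move=> A B [L1 [H1 HA]] [L2 [H2 HB]]; exists (L1 ++ L2); split.
      by move=> C HC; case: (in_app_or _ _ _ HC) => ?; [apply: H1|apply: H2].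
    move=> x Hx; split; [apply: HA|apply: HB] => C HC; apply: Hx; apply: in_or_app; tauto.
  - move=> P Q PQ [L [HL HP]]; exists L; split => // x Hx; exact/PQ/HP.
have [W [UW FW]] := ultraFilterLemma FF.
exists W; split; last first.
  move=> A GA; apply: FW; exists (A :: nil); split.
    by move=> B [<-|[]].
  by move=> x Hx; apply: Hx; left.
have WF : ProperFilter W by apply: ultra_proper.
split; first exact: (@filterT _ W).
split; first exact: (filter_not_empty W).
split; first by move=> A B WA AB; exact: (filterS AB WA).
split; first by move=> A B WA WB; exact: (filterI WA WB).
move=> A; exact: (in_ultra_setVsetC A UW).
Qed.
From Stdlib Require Import Classical.

Lemma opdef (S : Type) (op : S -> S -> option S) s t :
  defined op s t -> exists z, op s t = Some z.
Proof. unfold defined; destruct (op s t) as [z|]; [eauto|congruence]. Qed.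

Lemma gamma_prod (S : Type) (op : S -> S -> option S) (Hassoc : psg_assoc op) U V :
  gammaS op U -> gammaS op V -> gammaS op (uprod op U V).
Proof.
intros [[UT [UF [UM [UI UC]]]] UD] [[VT [VF [VM [VI VC]]]] VD].
unfold uprod; split; [split; [|split; [|split; [|split]]]|].
- apply (UM _ _ UT); intros s _. apply (VM _ _ (VD s)); intros t Ht.
  destruct (opdef _ _ _ _ Ht) as [z Hz]; eauto.
- intro H. apply UF. apply (UM _ _ H). intros s Hs. apply VF.
  apply (VM _ _ Hs). intros t [z [_ []]].
- intros A B HA HAB. apply (UM _ _ HA). intros s Hs. apply (VM _ _ Hs).
  intros t [z [Hz Az]]; eauto.
- intros A B HA HB. apply (UM _ _ (UI _ _ HA HB)). intros s [H1 H2].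
  apply (VM _ _ (VI _ _ H1 H2)). intros t [[z1 [Hz1 A1]] [z2 [Hz2 B2]]].
  exists z1; split; [auto|split; congruence].
- intro A. destruct (UC (fun s => V (fun t => exists z, op s t = Some z /\ A z))) as [H|H].
  + left; exact H.
  + right. apply (UM _ _ H).
    intros s Hs. destruct (VC (fun t => exists z, op s t = Some z /\ A z)) as [H1|H1];
        [contradiction|].
      apply (VM _ _ (VI _ _ H1 (VD s))). intros t [Hn Hd].
      destruct (opdef _ _ _ _ Hd) as [z Hz]. exists z; split; [auto|].
      intro Az; apply Hn; eauto.
- intro s. apply (UM _ _ (UD s)). intros r Hr.
  destruct (opdef _ _ _ _ Hr) as [x Hx].
  apply (VM _ _ (VD x)). intros t Ht.
  pose proof (Hassoc s r t) as E. rewrite Hx in E.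
  destruct (op r t) as [y|] eqn:Ey.
  + exists y; split; [reflexivity|]. unfold defined in *. congruence.
  + unfold defined in Ht. contradiction.
Qed.


Lemma uf_inter (S : Type) (W : (S -> Prop) -> Prop) (L : list (S -> Prop)) :
  ultrafilter W -> (forall A, In A L -> W A) -> W (fun x => forall A, In A L -> A x).
Proof.
intros [WT [WF [WM [WI WC]]]]. induction L as [|A L IH]; intro H.
- apply (WM _ _ WT). intros x _ A [].
- apply (WM _ _ (WI _ _ (H A (or_introl Logic.eq_refl)) (IH (fun B HB => H B (or_intror HB))))).
  intros x [Ax Hx] B [HB|HB]; [subst B; exact Ax|exact (Hx B HB)].
Qed.

Lemma hat_nonempty (S : Type) (op : S -> S -> option S) (I : S -> Prop) :
  directed op I -> exists U, hat op I U.
Proof.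
intro Hdir.
destruct (ext_ultra _ (fun A => A = I \/ exists s, A = defined op s)) as [W [HW HG]].
- intros L HL.
  assert (Inv : exists xs, forall x, I x -> (forall s, In s xs -> defined op s x) ->
                  forall A, In A L -> A x).
  { clear -HL. induction L as [|A L IH].
    - exists nil. intros x _ _ A [].
    - destruct IH as [xs Hxs]. { intros B HB; apply HL; right; exact HB. }
      destruct (HL A (or_introl Logic.eq_refl)) as [->|[s ->]].
      + exists xs. intros x Ix Hd B [<-|HB]; [exact Ix|exact (Hxs x Ix Hd B HB)].
      + exists (s :: xs). intros x Ix Hd B [<-|HB].
        * apply Hd; left; reflexivity.
        * apply (Hxs x Ix); [intros s' Hs'; apply Hd; right; exact Hs'|exact HB]. }
  destruct Inv as [xs Hxs]. destruct (Hdir xs) as [x [Ix Hx]].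
  exists x. apply Hxs; assumption.
- exists W. split; [split; [exact HW|]|].
  + intro s. apply HG. right. exists s. reflexivity.
  + apply HG. left. reflexivity.
Qed.

Lemma hat_compact (S : Type) (op : S -> S -> option S) (I : S -> Prop) :
  gcompact op (hat op I).
Proof.
intros iota O Hopen Hcov. apply NNPP; intro Hno.
assert (H : forall l, exists U, hat op I U /\ forall i, In i l -> ~ O i U).
{ intro l. apply NNPP; intro H0. apply Hno. exists l. intros U HU.
  apply NNPP; intro H1. apply H0. exists U. split; [exact HU|].
  intros i Hi HO. apply H1. exists i. split; assumption. }
destruct (ext_ultra _ (fun A => A = I \/ (exists s, A = defined op s) \/
   exists B, (exists i, forall V, gammaS op V -> V B -> O i V) /\ A = (fun x => ~ B x)))
  as [W [HW HG]].
- intros L HL.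
  assert (Inv : exists lis, forall W, hat op I W -> (forall i, In i lis -> ~ O i W) ->
                  forall A, In A L -> W A).
  { clear -HL. induction L as [|A L IH].
    - exists nil. intros W _ _ A [].
    - destruct IH as [lis His]. { intros B HB; apply HL; right; exact HB. }
      destruct (HL A (or_introl Logic.eq_refl)) as [->|[[s ->]|[B [[i Hi] ->]]]].
      + exists lis. intros W HW Hn C [<-|HC]; [exact (proj2 HW)|exact (His W HW Hn C HC)].
      + exists lis. intros W HW Hn C [<-|HC]; [exact (proj2 (proj1 HW) s)|exact (His W HW Hn C HC)].
      + exists (i :: lis). intros W HW Hn C [<-|HC].
        * destruct (proj2 (proj2 (proj2 (proj2 (proj1 (proj1 HW))))) B) as [WB|WB]; [|exact WB].
          exfalso. apply (Hn i (or_introl Logic.eq_refl)). apply Hi; [exact (proj1 HW)|exact WB].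
        * apply (His W HW); [intros j Hj; apply Hn; right; exact Hj|exact HC]. }
  destruct Inv as [lis His]. destruct (H lis) as [W [HW Hn]].
  pose proof (uf_inter _ W L (proj1 (proj1 HW)) (His W HW Hn)) as Hint.
  apply NNPP; intro Hnx. destruct HW as [[[_ [WF [WM _]]] _] _].
  apply WF. apply (WM _ _ Hint). intros x Hx. apply Hnx. exists x. exact Hx.
- assert (GW : gammaS op W).
  { split; [exact HW|]. intro s. apply HG. right; left. exists s; reflexivity. }
  assert (WI : W I) by (apply HG; left; reflexivity).
  destruct (Hcov W (conj GW WI)) as [i Hi].
  destruct (Hopen i W GW Hi) as [A [WA HA]].
  assert (WnA : W (fun x => ~ A x)).
  { apply HG. right; right. exists A. split; [exists i; exact HA|reflexivity]. }
  destruct HW as [_ [WF [WM [WI' _]]]].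
  apply WF. apply (WM _ _ (WI' _ _ WA WnA)). intros x [Ax nAx]. exact (nAx Ax).
Qed.

Theorem lemma4p2 (S : Type) (op : S -> S -> option S) (Hassoc : psg_assoc op) :
  (forall I : S -> Prop, two_sided_ideal op I -> directed op I ->
     gtwo_sided_ideal op (hat op I) /\ gcompact op (hat op I)) /\
  (forall E : S -> Prop, right_ideal op E -> directed op E ->
     gright_ideal op (hat op E) /\ gcompact op (hat op E)).
Proof.
split.
- intros I [_ HI] Hdir. split; [|apply hat_compact].
  split; [apply hat_nonempty; exact Hdir|]. split; [intros U HU; exact (proj1 HU)|].
  intros U V GU GV HUV. split; [apply gamma_prod; assumption|].
  destruct GU as [[UT [UF [UM [UI UC]]]] UD]. destruct GV as [[VT [VF [VM [VI VC]]]] VD].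
  unfold uprod. destruct HUV as [[_ UI0]|[_ VI0]].
  + apply (UM _ _ UI0). intros s Is. apply (VM _ _ (VD s)). intros t Ht.
    destruct (opdef _ _ _ _ Ht) as [z Hz]. exists z. split; [exact Hz|].
    apply (HI s t z Hz). left; exact Is.
  + apply (UM _ _ UT). intros s _. apply (VM _ _ (VI _ _ (VD s) VI0)). intros t [Ht It].
    destruct (opdef _ _ _ _ Ht) as [z Hz]. exists z. split; [exact Hz|].
    apply (HI s t z Hz). right; exact It.
- intros I [_ HI] Hdir. split; [|apply hat_compact].
  split; [apply hat_nonempty; exact Hdir|]. split; [intros U HU; exact (proj1 HU)|].
  intros U V GU GV HUV. split; [apply gamma_prod; assumption|].
  destruct GU as [[UT [UF [UM [UI UC]]]] UD]. destruct GV as [[VT [VF [VM [VI VC]]]] VD].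
  unfold uprod. destruct HUV as [_ UI0].
  apply (UM _ _ UI0). intros s Is. apply (VM _ _ (VD s)). intros t Ht.
  destruct (opdef _ _ _ _ Ht) as [z Hz]. exists z. split; [exact Hz|].
  apply (HI s t z Hz). exact Is.
Qed.
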